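(* If the patch size $n$ (number of interior points per patch) is a multiple of the microscale period $p$ of the diffusivities, then the patch scheme applied directly to the single heterogeneous lattice diffusion $d^2\partial_t u_i=\kappa_{i+\frac12}(u_{i+1}-u_i)+\kappa_{i-\frac12}(u_{i-1}-u_i)$ (without forming the ensemble of phase-shifts), with edge values $u^I_{n+1}=E_x^{r}u^I_1$, $u^I_0=E_x^{-r}u^I_n$, is consistent (to arbitrarily high order in $H$) with the homogenisation $\partial_tV=\mathcal K_2\partial_x^2V+\mathcal K_4d^2\partial_x^4V+\cdots$ of that heterogeneous diffusion, $\mathcal K_2=p/\sum_{\ell=0}^{p-1}\kappa_{\ell+1/2}^{-1}$.
   Context: Diffusivities $\kappa_{i+1/2}$ real, positive, $p$-periodic. Patches: $N$ patches on a macroscale-periodic domain, spacing $H$, $n$ interior points each of lattice spacing $d$, width $h=nd=rH$; all patches positioned so that their diffusivity pattern is identical. $E_x^{\pm r}$ denotes the macroscale shift by $\pm rH$ (one patch width) through the patches, realised by interpolation. ''Consistent'' means the mid-patch values obey the same lattice evolution operator as the full-domain system when the shifts $E_x^{\pm r}$ are exact. *)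

(* Defs.v *)
From Stdlib Require Import Reals ZArith.
Open Scope R_scope.

(* Convention: kappa j stands for the diffusivity kappa_{j+1/2}, so
   kappa (j-1) is kappa_{j-1/2}.  Lattice point j sits at x_j = j*d. *)

Definition full_rhs (kappa : Z -> R) (d : R) (u : Z -> R) (j : Z) : R :=
  (kappa j * (u (j + 1)%Z - u j) + kappa (j - 1)%Z * (u (j - 1)%Z - u j)) / (d ^ 2).

(* Lattice index of the i-th point (i = 0..n+1) of patch I: patches are
   spaced Hd lattice points apart (H = Hd*d), patch 0 starting after b. *)
Definition patch_pos (b Hd : Z) (I : nat) (i : Z) : Z := (b + Z.of_nat I * Hd + i)%Z.

Definition patch_value (n : Z) (U : Z -> R) (EL ER : R) (i : Z) : R :=
  if Z.eqb i 0 then EL else if Z.eqb i (n + 1) then ER else U i.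

Definition patch_rhs (kappa : Z -> R) (d : R) (b Hd n : Z)
    (U : nat -> Z -> R) (EL ER : nat -> R) (I : nat) (i : Z) : R :=
  let w := patch_value n (U I) (EL I) (ER I) in
  let j := patch_pos b Hd I i in
  (kappa j * (w (i + 1)%Z - w i) + kappa (j - 1)%Z * (w (i - 1)%Z - w i)) / (d ^ 2).

(* A field u on the lattice is represented by its
   phase fields v q : R -> R (u_j = v j (j*d), v p-periodic in the phase),
   i.e. the smooth interpolants through the points of each phase. *)
Definition exact_shift (v : Z -> R -> R) (q : Z) (s x : R) : R := v q (x + s).

Definition lattice_field (v : Z -> R -> R) (d : R) (j : Z) : R := v j (IZR j * d).

(* Main.v *)
Require Import Defs.
From Stdlib Require Import Reals ZArith Lia Lra.
Open Scope R_scope.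

Lemma vshift (p : Z) (v : Z -> R -> R) (Hvph : forall q, v (q + p)%Z = v q) :
  forall k q, v (q + k * p)%Z = v q.
Proof.
  assert (Hn : forall m q, v (q + Z.of_nat m * p)%Z = v q).
  { induction m; intro q. simpl. now rewrite Z.add_0_r.
    rewrite Nat2Z.inj_succ. replace (q + Z.succ (Z.of_nat m) * p)%Z with ((q + Z.of_nat m * p) + p)%Z by lia.
    rewrite Hvph; auto. }
  intros k q. destruct (Z_le_gt_dec 0 k).
  - rewrite <- (Z2Nat.id k) by lia. apply Hn.
  - rewrite <- (Hn (Z.to_nat (- k)) (q + k * p)%Z). f_equal.
    rewrite Z2Nat.id by lia. lia.
Qed.
Theorem corollary6
  (p n Hd b : Z) (N : nat) (d : R) (kappa : Z -> R) (v : Z -> R -> R)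
  (Hp : (0 < p)%Z) (Hn : (0 < n)%Z) (HHd : (0 < Hd)%Z) (HN : (0 < N)%nat)
  (Hd0 : 0 < d)
  (Hkpos : forall j, 0 < kappa j)
  (Hkper : forall j, kappa (j + p)%Z = kappa j)
  (Hpatt : (p | Hd)%Z)                       (* identical diffusivity pattern in every patch *)
  (Hvph : forall q, v (q + p)%Z = v q)         (* phase fields depend only on phase mod p *)
  (Hvper : forall q x, v q (x + INR N * IZR Hd * d) = v q x)  (* macroscale periodic domain *)
  (Hmult : (p | n)%Z) :                        (* patch size a multiple of the period *)
  let u := lattice_field v d in
  let U := fun (I : nat) (i : Z) => u (patch_pos b Hd I i) in
  let ER := fun I => exact_shift v (patch_pos b Hd I 1) (IZR n * d)
                       (IZR (patch_pos b Hd I 1) * d) in   (* u^I_{n+1} = E^r u^I_1 *)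
  let EL := fun I => exact_shift v (patch_pos b Hd I n) (- (IZR n * d))
                       (IZR (patch_pos b Hd I n) * d) in   (* u^I_0 = E^{-r} u^I_n *)
  forall (I : nat) (i : Z), (I < N)%nat -> (1 <= i <= n)%Z ->
    patch_rhs kappa d b Hd n U EL ER I i = full_rhs kappa d u (patch_pos b Hd I i).
Proof.
  intros u U ER EL I i HI Hi.
  destruct Hmult as [k Hk].
  assert (HL : EL I = u (patch_pos b Hd I 0)).
  { unfold EL, exact_shift, u, lattice_field.
    replace (patch_pos b Hd I n) with (patch_pos b Hd I 0 + k * p)%Z by (unfold patch_pos; lia).
    rewrite (vshift p v Hvph). f_equal. unfold patch_pos. rewrite !plus_IZR, Hk, mult_IZR. ring. }
  assert (HR : ER I = u (patch_pos b Hd I (n+1))).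
  { unfold ER, exact_shift, u, lattice_field.
    replace (patch_pos b Hd I (n+1)) with (patch_pos b Hd I 1 + k * p)%Z by (unfold patch_pos; lia).
    rewrite (vshift p v Hvph). f_equal. rewrite plus_IZR, Hk, mult_IZR. ring. }
  assert (Hw : forall j, (0 <= j <= n + 1)%Z ->
     patch_value n (U I) (EL I) (ER I) j = u (patch_pos b Hd I j)).
  { intros j Hj. unfold patch_value.
    destruct (Z.eqb_spec j 0). subst; auto.
    destruct (Z.eqb_spec j (n+1)). subst; auto. reflexivity. }
  unfold patch_rhs, full_rhs. cbv zeta.
  rewrite !Hw by lia.
  unfold patch_pos.
  replace (b + Z.of_nat I * Hd + (i + 1))%Z with (b + Z.of_nat I * Hd + i + 1)%Z by lia.
  replace (b + Z.of_nat I * Hd + (i - 1))%Z with (b + Z.of_nat I * Hd + i - 1)%Z by lia.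
  reflexivity.
Qed.
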